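(* $\mathrm{1RFA}/n\neq\mathrm{1RFA}/Rn$.
   Context: A 1rfa is a one-way deterministic finite automaton satisfying the reversibility condition (for every state $q$ and tape symbol $\sigma$ at most one $q'$ with $\delta(q',\sigma)=q$). For equal-length strings $x,y$, $\genfrac{[}{]}{0pt}{}{x}{y}$ is the two-track string with $x$ on the upper track and $y$ on the lower track. $\mathrm{1RFA}/n$ is the family of languages $L$ for which there exist a 1rfa $M$ and a (deterministic) advice function $h:\mathbb{N}\to\Gamma^*$ with $|h(n)|=n$ such that $M(\genfrac{[}{]}{0pt}{}{x}{h(|x|)})=L(x)$ for all $x$. $\mathrm{1RFA}/Rn$ is defined analogously with randomized advice: a probability ensemble $\{D_n\}$, $D_n$ a distribution on $\Gamma^n$, such that $M$ on $\genfrac{[}{]}{0pt}{}{x}{y}$ with $y\sim D_n$ outputs $L(x)$ with probability at least $1-\varepsilon$ for a constant $\varepsilon\in[0,1/2)$. *)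

(* Defs.v *)
From HB Require Import structures.
From mathcomp Require Import all_boot all_order all_algebra.
From Stdlib Require Import Reals.
From mathcomp Require Import Rstruct.
Set Implicit Arguments. Unset Strict Implicit. Unset Printing Implicit Defensive.
Import Order.TTheory GRing.Theory Num.Theory.

Inductive tape_sym (A : Type) := Cent | Dollar | Sym of A.
Arguments Cent {A}. Arguments Dollar {A}.

Record dfa1 (A : Type) := Dfa1 {
  state : finType;
  q_init : state;
  delta : state -> tape_sym A -> state;
  acc : pred state;
  rej : pred state }.
Arguments state {A} d.
Arguments q_init {A} d.
Arguments delta {A} d _ _.
Arguments acc {A} d _.
Arguments rej {A} d _.

Definition is_1rfa (A : Type) (M : dfa1 A) : Prop :=
  (forall q, ~~ (acc M q && rej M q)) /\
  (forall (s : tape_sym A) (q q1 q2 : state M),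
      delta M q1 s = q -> delta M q2 s = q -> q1 = q2).

Fixpoint run (A : Type) (M : dfa1 A) (q : state M) (w : seq (tape_sym A)) : state M :=
  match w with
  | [::] => q
  | a :: w' => if acc M q || rej M q then q else run (delta M q a) w'
  end.

Definition outputs (A : Type) (M : dfa1 A) (w : seq A) (b : bool) : bool :=
  let q := run (q_init M) (Cent :: map (@Sym A) w ++ [:: Dollar]) in
  if b then acc M q else rej M q.

Definition track2 (S G : Type) (x : seq S) (y : seq G) : seq (S * G) := zip x y.

Definition in_1RFA_n (S : finType) (L : seq S -> bool) : Prop :=
  exists (G : finType) (M : dfa1 (S * G)), is_1rfa M /\
    exists h : forall n : nat, n.-tuple G,
      forall x : seq S, outputs M (track2 x (h (size x))) (L x).

Local Open Scope ring_scope.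

Definition is_distr (T : finType) (D : {ffun T -> R}) : Prop :=
  (forall t, 0 <= D t) /\ \sum_(t : T) D t = 1.

Definition in_1RFA_Rn (S : finType) (L : seq S -> bool) : Prop :=
  exists (G : finType) (M : dfa1 (S * G)), is_1rfa M /\
    exists eps : R, 0 <= eps /\ eps < 1 / 2 /\
    exists D : forall n : nat, {ffun n.-tuple G -> R},
      (forall n, is_distr (D n)) /\
      forall x : seq S,
        1 - eps <= \sum_(y : (size x).-tuple G | outputs M (track2 x y) (L x)) D (size x) y.

(* Main.v *)
Require Import Defs.
From mathcomp Require Import all_boot all_order all_algebra.
From Stdlib Require Import Reals.
From mathcomp Require Import Rstruct.
From mathcomp Require Import ring lra zify.
Set Implicit Arguments. Unset Strict Implicit. Unset Printing Implicit Defensive.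
Import Order.TTheory GRing.Theory Num.Theory.

Definition Lc (x : seq bool) : bool := take (size x)./2 x == drop (uphalf (size x)) x.

Lemma run_halt A (M : dfa1 A) q w : acc M q || rej M q -> @run A M q w = q.
Proof. by case: w => //= a w ->. Qed.

Lemma run_cat A (M : dfa1 A) q w1 w2 : @run A M q (w1 ++ w2) = run (run q w1) w2.
Proof.
elim: w1 q => //= a w IH q.
case H: (acc M q || rej M q); last by apply: IH.
by rewrite run_halt.
Qed.

Lemma not_n : ~ in_1RFA_n Lc.
Proof.
move=> [G [M [[H1 _] [h Hh]]]].
set m := #|state M|.
set n := m + m.
set y : seq G := h n.
have Hy : size y = n by rewrite /y size_tuple.
pose st (u : m.-tuple bool) :=
  run (q_init M) (Cent :: map (@Sym _) (zip u (take m y))).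
have key : forall u u' : m.-tuple bool,
  run (q_init M) (Cent :: map (@Sym _) (zip (u ++ u') y) ++ [:: Dollar]) =
  run (st u) (map (@Sym _) (zip u' (drop m y)) ++ [:: Dollar]).
  move=> u u'.
  rewrite -{1}(cat_take_drop m y) zip_cat; last first.
    by rewrite size_tuple size_takel // Hy leq_addr.
  by rewrite map_cat -catA -cat_cons run_cat.
have inj : injective st.
  move=> u u' E; apply/eqP; apply/negPn/negP => Hne.
  have A1 := Hh (u ++ u). have A2 := Hh (u' ++ u).
  rewrite /track2 size_cat !size_tuple -/n -/y in A1 A2.
  rewrite /outputs -/y in A1 A2. idtac.
  rewrite (key u u) in A1; rewrite (key u' u) -E in A2.
  have L1 : Lc (u ++ u).
    by rewrite /Lc size_cat !size_tuple addnn doubleK uphalf_double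
       take_size_cat ?size_tuple // drop_size_cat ?size_tuple.
  have L2 : Lc (u' ++ u) = false.
    rewrite /Lc size_cat !size_tuple addnn doubleK uphalf_double
       take_size_cat ?size_tuple // drop_size_cat ?size_tuple //.
    by apply/negP => /eqP /val_inj E'; rewrite E' eqxx in Hne.
  rewrite L1 in A1; rewrite L2 in A2.
  by move: (H1 (run (st u) (map (@Sym _) (zip u (drop m y)) ++ [:: Dollar]))); rewrite A1 A2.
have := leq_card _ inj.
by rewrite card_tuple card_bool leqNgt ltn_expl.
Qed.

Section RnPart.
Local Open Scope ring_scope.

Notation F3 := 'F_3.
Notation St := (F3 + F3)%type.
Definition term (p : bool * F3) : F3 := (nat_of_bool p.1)%:R * p.2.
Definition dl (q : St) (t : tape_sym (bool * F3)) : St :=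
 match t with
 | Cent => q
 | Sym p => match q with inl s => inl (s + term p) | inr s => inr s end
 | Dollar => match q with inl s => inr s | inr s => inl s end end.
Definition Mfa : dfa1 (bool * F3) :=
  @Dfa1 _ St (inl 0) dl (fun q => if q is inr s then s == 0 else false)
    (fun q => if q is inr s then s != 0 else false).

Lemma Mfa_1rfa : is_1rfa Mfa.
Proof.
split.
  by case=> //= s; rewrite andbN.
move=> [| |p] q [s1|s1] [s2|s2] //; try (simpl; congruence).
move=> H1 H2; rewrite -H2 in H1.
have := congr1 (fun q : St => if q is inl s then s else 0) H1.
by rewrite /= /dl => /addIr ->.
Qed.

Lemma run_M s w : run (inl s : state Mfa) (map (@Sym _) w ++ [:: Dollar])
   = inr (s + \sum_(p <- w) term p).
Proof.
elim: w s => [|p w IH] s /=; first by rewrite big_nil addr0.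
by rewrite IH big_cons addrA.
Qed.

Lemma out_M (x : seq bool) (y : seq F3) b : outputs Mfa (track2 x y) b =
  let t := \sum_(p <- zip x y) term p in if b then t == 0 else t != 0.
Proof. by rewrite /outputs /= run_M add0r. Qed.

Definition adv n (z : {ffun 'I_(n./2) -> F3}) : seq F3 :=
  [seq z i | i <- enum 'I_(n./2)] ++ nseq (odd n) 0 ++ [seq - z i | i <- enum 'I_(n./2)].

Lemma size_adv n z : size (@adv n z) = n.
Proof.
rewrite /adv !size_cat !size_map size_nseq -enumT size_enum_ord.
by rewrite addnCA addnn odd_double_half.
Qed.

Definition cc n : R := (expn 3 n./2)%:R^-1.

Definition Dn n : {ffun n.-tuple F3 -> R} :=
  [ffun y => \sum_(z : {ffun 'I_(n./2) -> F3}) cc n * ((val y == adv z)%:R)].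

Lemma sum_tup n (T : finType) (s : seq T) (Hs : size s == n) (P : pred (seq T)) :
 \sum_(y : n.-tuple T | P y) ((val y == s)%:R : R) = (P s)%:R.
Proof.
case Ps: (P s).
  rewrite (bigD1 (Tuple Hs)) //= eqxx big1 ?addr0 // => y /andP [_ Hy].
  case E: (val y == s) => //; move/eqP: E => E.
  by case/eqP: Hy; apply: val_inj.
apply: big1 => y Py; case E: (val y == s) => //; move/eqP: E => E.
by rewrite -E Py in Ps.
Qed.

Lemma sumD n (P : pred (seq F3)) :
  \sum_(y : n.-tuple F3 | P y) Dn n y = \sum_(z : {ffun 'I_(n./2) -> F3}) cc n * (P (adv z))%:R.
Proof.
under eq_bigr do rewrite ffunE.
rewrite exchange_big /=; apply: eq_bigr => z _.
by rewrite -mulr_sumr sum_tup // size_adv.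
Qed.

Lemma card_F3 : (#|F3| = 3)%N.
Proof. by rewrite card_Fp. Qed.

Lemma sum_cc n : \sum_(z : {ffun 'I_(n./2) -> F3}) cc n = 1.
Proof.
rewrite sumr_const card_ffun card_F3 card_ord /cc.
rewrite ?mul1n.
rewrite -(mulr_natr ((expn 3 n./2)%:R)^-1) mulVf //.
by rewrite pnatr_eq0 -lt0n expn_gt0.
Qed.

Lemma Dn_distr n : is_distr (Dn n).
Proof.
split.
  move=> y; rewrite ffunE; apply: sumr_ge0 => z _; apply: mulr_ge0 => //.
  by rewrite /cc invr_ge0 ler0n.
have := sumD n predT; rewrite /= => ->.
by rewrite -[RHS](sum_cc n); apply: eq_bigr => z _; rewrite mulr1.
Qed.

Lemma zip_sum k (a : seq bool) (b : seq F3) : size a = k -> size b = k ->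
  \sum_(p <- zip a b) term p = \sum_(i < k) (nat_of_bool (nth false a i))%:R * nth 0 b i.
Proof.
move=> Ha Hb; rewrite (big_nth (false, 0)) size_zip Ha Hb minnn big_mkord.
by apply: eq_bigr => i _; rewrite nth_zip ?Ha ?Hb.
Qed.

Definition dd (x : seq bool) (i : nat) : F3 :=
  (nat_of_bool (nth false x i))%:R - (nat_of_bool (nth false x (uphalf (size x) + i)))%:R.

Lemma S_formula n (x : seq bool) (z : {ffun 'I_(n./2) -> F3}) : size x = n ->
  \sum_(p <- zip x (adv z)) term p = \sum_(i < n./2) dd x i * z i.
Proof.
move=> Hx.
set m := n./2; set o := odd n.
have Hn : addn (addn o m) m = n by rewrite -addnA addnn odd_double_half.
have Ex : x = take m x ++ take o (drop m x) ++ drop (addn o m) x.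
  by rewrite -drop_drop !cat_take_drop.
have H1 : size (take m x) = m by rewrite size_takel //; lia.
have H2 : size (take o (drop m x)) = o by rewrite size_takel // size_drop; lia.
have H3 : size (drop (addn o m) x) = m by rewrite size_drop; lia.
have Hm : size [seq z i | i <- enum 'I_m] = m by rewrite size_map -?enumT size_enum_ord.
have Hm' : size [seq - z i | i <- enum 'I_m] = m by rewrite size_map -?enumT size_enum_ord.
rewrite {1}Ex /adv zip_cat ?H1 // zip_cat ?H2 ?size_nseq // !big_cat /=.
rewrite (zip_sum H1 Hm) (zip_sum H2 (size_nseq _ _)) (zip_sum H3 Hm').
rewrite [\sum_(i < o) _]big1 ?add0r; last by move=> i _; rewrite nth_nseq if_same mulr0.
rewrite -big_split /=; apply: eq_bigr => i _.
rewrite /dd Hx uphalf_half -/o -/m nth_take // nth_drop.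
rewrite !(nth_map i) ?size_enum_ord -?enumT ?size_enum_ord // nth_ord_enum.
by rewrite mulrN -mulrBl.
Qed.

Definition Fd m (d : 'I_m -> F3) (z : {ffun 'I_m -> F3}) : F3 := \sum_i d i * z i.

Lemma count_eq m (d : 'I_m -> F3) j (k : F3) : d j != 0 ->
  #|[pred z | Fd d z == k]| = #|[pred z | Fd d z == 0]|.
Proof.
move=> Hj.
pose t := k / d j.
pose phi (z : {ffun 'I_m -> F3}) := [ffun i => z i + (nat_of_bool (i == j))%:R * t].
have Hphi z : Fd d (phi z) = Fd d z + k.
  rewrite /Fd.
  under eq_bigr do rewrite ffunE mulrDr.
  rewrite big_split /=; congr (_ + _).
  rewrite (bigD1 j) //= eqxx mul1r big1 ?addr0.
    by rewrite /t mulrC -mulrA mulVf // mulr1.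
  by move=> i /negbTE ->; rewrite mul0r mulr0.
have inj : injective phi.
  move=> z1 z2 E; apply/ffunP => i; have := congr1 (fun f : {ffun _ -> _} => f i) E.
  by rewrite !ffunE => /addIr.
rewrite -!sum1_card (reindex_inj inj) /=; apply: eq_bigl => z.
by rewrite !inE Hphi -subr_eq0 addrK.
Qed.

Lemma count_tot m (d : 'I_m -> F3) j : d j != 0 ->
  muln 3 #|[pred z | Fd d z == 0]| = expn 3 m.
Proof.
move=> Hj.
have E : (\sum_(k : F3) #|[pred z | Fd d z == k]| = #|{ffun 'I_m -> F3}|)%N.
  rewrite -sum1_card (partition_big (fun z => Fd d z) xpredT) //=.
  apply: eq_bigr => k _; rewrite -sum1_card; apply: eq_bigl => z.
  by rewrite !inE.
rewrite card_ffun card_F3 card_ord in E.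
rewrite -E (eq_bigr (fun _ => #|[pred z | Fd d z == 0]|)); last first.
  by move=> k _; apply: count_eq Hj.
by rewrite sum_nat_const card_F3.
Qed.


Lemma sum_cnt (T : finType) (c : R) (b : pred T) :
  \sum_(z : T) c * (b z)%:R = c * (#|b|)%:R.
Proof.
rewrite -mulr_sumr; congr (c * _).
rewrite -sum1_card natr_sum [RHS]big_mkcond /=.
by apply: eq_bigr => z _; rewrite unfold_in; case: (b z).
Qed.

Lemma yes_Rn : in_1RFA_Rn Lc.
Proof.
exists 'F_3, Mfa; split; first exact: Mfa_1rfa.
exists (1/3); split; first lra.
split; first lra.
exists Dn; split; first exact: Dn_distr.
move=> x.
rewrite (sumD _ (fun s => outputs Mfa (track2 x s) (Lc x))).
under eq_bigr do rewrite out_M /= (S_formula _ (erefl (size x))).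
set n := size x; set m := n./2.
have Hn : addn (addn (odd n) m) m = n by rewrite -addnA addnn odd_double_half.
have Hsz1 : size (take m x) = m by rewrite size_takel //; lia.
have Hsz2 : size (drop (uphalf n) x) = m by rewrite size_drop uphalf_half; lia.
case Lx: (Lc x).
  have Hd : forall i : 'I_m, dd x i = 0.
    move=> i; move/eqP: Lx => Lx.
    have := congr1 (fun s => nth false s i) Lx.
    by rewrite /= nth_take // nth_drop /dd -/n => ->; rewrite subrr.
  rewrite (eq_bigr (fun _ => cc n)); first by rewrite sum_cc; lra.
  by move=> z _; rewrite big1 ?eqxx ?mulr1 // => i _; rewrite Hd mul0r.
case: (boolP [exists i : 'I_m, nth false x i != nth false x (uphalf n + i)]); last first.
  move=> /existsPn Hall; exfalso; move: Lx; rewrite /Lc -/n -/m => /negbT/negP; apply.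
  apply/eqP/(@eq_from_nth _ false); first by rewrite Hsz1 Hsz2.
  move=> i; rewrite Hsz1 => Hi; rewrite nth_take // nth_drop.
  by apply/eqP; have := Hall (Ordinal Hi); rewrite negbK.
case/existsP=> j Hj.
have Hdj : dd x j != 0.
  rewrite /dd -/n; move: Hj.
  case: (nth false x j); case: (nth false x (uphalf n + j)) => //= _.

rewrite (sum_cnt (cc n) (fun z => Fd (fun i => dd x i) z != 0)).
have Htot := @count_tot m (fun i : 'I_m => dd x i) j Hdj.
set N := #|[pred z | Fd (fun i : 'I_m => dd x i) z == 0]| in Htot *.
have HC := cardC [pred z | Fd (fun i : 'I_m => dd x i) z == 0].
rewrite card_ffun card_F3 card_ord -/N -Htot in HC.
set K := (X in _ <= _ * X%:R).
have -> : K = muln 2 N.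
  have -> : K = #|[predC [pred z | Fd (fun i : 'I_m => dd x i) z == 0]]|.
    by apply: eq_card => z; rewrite !inE.
  apply/eqP; rewrite -(eqn_add2l N) HC; apply/eqP; lia.
have HN : (N%:R : R) != 0.
  rewrite pnatr_eq0 -lt0n; have := expn_gt0 3 m; rewrite -Htot; lia.
rewrite /cc -/m -Htot !natrM.
rewrite invfM mulrACA mulVf // mulr1.
lra.
Qed.

End RnPart.

Theorem corollary4p4 :
  ~ (forall (S : finType) (L : seq S -> bool), in_1RFA_n L <-> in_1RFA_Rn L).
Proof.
move=> H; apply: not_n; apply/H; exact: yes_Rn.
Qed.
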